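(* Let $\Delta$ be a local derivation of $\mathcal{S}$ with $\Delta(G_0)=0$. Then for every $m\in\mathbb{Z}\setminus\{0\}$ there exists $a_m\in\mathbb{C}$ such that $\Delta(G_m)=a_mG_m$.
   Context: $\mathcal{S}$ is the centerless super Virasoro algebra: the Lie superalgebra over $\mathbb{C}$ with basis $\{L_m,G_n: m,n\in\mathbb{Z}\}$, $L_m$ even, $G_n$ odd, and brackets $[L_m,L_n]=(m-n)L_{m+n}$, $[L_m,G_r]=(\frac m2-r)G_{m+r}$, $[G_r,G_s]=2L_{r+s}$. A homogeneous linear map $D$ of parity $|D|$ is a derivation if $D([x,y])=[D(x),y]+(-1)^{|D||x|}[x,D(y)]$ for homogeneous $x,y$; derivations are sums of even and odd ones. A linear map $\Delta:\mathcal{S}\to\mathcal{S}$ is a local derivation if for every $x$ there is a derivation $D_x$ with $\Delta(x)=D_x(x)$. *)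

(* Defs.v *)
From HB Require Import structures.
From mathcomp Require Import all_boot all_order all_algebra.
From mathcomp Require Import finmap.
From mathcomp Require Import monalg.
From mathcomp.real_closed Require Import complex.
From mathcomp Require Import Rstruct.
From Stdlib Require Import Rdefinitions.

Set Implicit Arguments.
Unset Strict Implicit.
Unset Printing Implicit Defensive.

Import GRing.Theory.
Local Open Scope ring_scope.

Definition C : Type := (Rdefinitions.R)[i].
HB.instance Definition _ := GRing.Field.on C.

(* The centerless super Virasoro algebra S as a C-vector space:
   x = (even part, odd part), each a finitely supported function int -> C,
   i.e. x = sum_m x.1@_m L_m + sum_r x.2@_r G_r. *)
Definition SV : Type := ({malg C[int]} * {malg C[int]})%type.
HB.instance Definition _ := GRing.Lmodule.on SV.

Definition Lb (m : int) : SV := (<< m >>, 0).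
Definition Gb (r : int) : SV := (0, << r >>).

(* The super bracket, defined on the basis by
   [L_m,L_n] = (m-n) L_{m+n}, [L_m,G_r] = (m/2 - r) G_{m+r},
   [G_r,L_m] = - [L_m,G_r], [G_r,G_s] = 2 L_{r+s}, and extended bilinearly. *)
Definition sbr (x y : SV) : SV :=
  \sum_(m <- msupp x.1) \sum_(n <- msupp y.1)
      (x.1@_m * y.1@_n * (m - n)%:~R) *: Lb (m + n)
  + \sum_(m <- msupp x.1) \sum_(r <- msupp y.2)
      (x.1@_m * y.2@_r * (m%:~R / 2 - r%:~R)) *: Gb (m + r)
  - \sum_(r <- msupp x.2) \sum_(m <- msupp y.1)
      (x.2@_r * y.1@_m * (m%:~R / 2 - r%:~R)) *: Gb (m + r)
  + \sum_(r <- msupp x.2) \sum_(s <- msupp y.2)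
      (x.2@_r * y.2@_s * 2) *: Lb (r + s).

Definition even_elt (x : SV) : Prop := x.2 = 0.
Definition odd_elt (x : SV) : Prop := x.1 = 0.
Definition homog (x : SV) : Prop := even_elt x \/ odd_elt x.

Definition is_linear (f : SV -> SV) : Prop :=
  forall (a : C) (u v : SV), f (a *: u + v) = a *: f u + f v.

Definition even_derivation (D : SV -> SV) : Prop :=
  [/\ is_linear D,
      (forall x, even_elt x -> even_elt (D x)),
      (forall x, odd_elt x -> odd_elt (D x)) &
      (forall x y, homog x -> homog y ->
         D (sbr x y) = sbr (D x) y + sbr x (D y))].

Definition odd_derivation (D : SV -> SV) : Prop :=
  [/\ is_linear D,
      (forall x, even_elt x -> odd_elt (D x)),
      (forall x, odd_elt x -> even_elt (D x)),
      (forall x y, even_elt x -> homog y ->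
         D (sbr x y) = sbr (D x) y + sbr x (D y)) &
      (forall x y, odd_elt x -> homog y ->
         D (sbr x y) = sbr (D x) y - sbr x (D y))].

Definition derivation (D : SV -> SV) : Prop :=
  exists D0 D1, even_derivation D0 /\ odd_derivation D1 /\
                forall x, D x = D0 x + D1 x.

Definition local_derivation (Delta : SV -> SV) : Prop :=
  is_linear Delta /\
  forall x, exists D, derivation D /\ Delta x = D x.

(* Main.v *)
From HB Require Import structures.
Require Import Defs.
From mathcomp Require Import all_boot all_order all_algebra finmap monalg ring zify.
From mathcomp.real_closed Require complex.
From mathcomp Require Rstruct.
Import GRing.Theory Num.Theory.
Local Open Scope ring_scope.

Module NumC.
Import complex Rstruct.
Lemma intC_eq0 (k : int) : ((k%:~R : C) == 0) = (k == 0).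
Proof. exact: (@intr_eq0 (Rdefinitions.R[i]) k). Qed.
Lemma natC_eq0 (n : nat) : ((n%:R : C) == 0) = (n == 0)%N.
Proof. exact: (@pnatr_eq0 (Rdefinitions.R[i]) n). Qed.
Lemma natC_inj (a b : nat) : ((a%:R : C) == b%:R) = (a == b).
Proof. exact: (@eqr_nat (Rdefinitions.R[i]) a b). Qed.
End NumC.
Import NumC.

Lemma sum_pick (s : seq int) (F : int -> C) (j : int) : uniq s ->
  (forall i, i \notin s -> F i = 0) ->
  \sum_(i <- s) F i * (i == j)%:R = F j.
Proof.
move=> us F0; have [js|jns] := boolP (j \in s).
  rewrite (big_rem j) //= eqxx mulr1 big_seq big1 ?addr0 // => i.
  rewrite (mem_rem_uniq _ us) inE; case/andP => /negbTE -> _; by rewrite mulr0.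
rewrite (F0 _ jns) big_seq big1 // => i iS; have /negbTE-> : i != j.
  by apply: contraNneq jns => <-.
by rewrite mulr0.
Qed.

Lemma msuppU1' (b : int) : msupp (<<b>> : {malg C[int]}) = [fset b]%fset.
Proof. by rewrite msuppU oner_eq0. Qed.

Lemma mcoeffU1' (b j : int) : (<<b>> : {malg C[int]})@_j = (b == j)%:R.
Proof. by rewrite mcoeffU. Qed.

Lemma sbrG x b : sbr x (Gb b) =
  \sum_(m <- msupp x.1) (x.1@_m * (m%:~R / 2 - b%:~R)) *: Gb (m + b)
  + \sum_(r <- msupp x.2) (x.2@_r * 2) *: Lb (r + b).
Proof.
have e1 : (Gb b).1 = 0 by []. have e2 : (Gb b).2 = <<b>> by [].
rewrite /sbr e1 e2 msupp0 msuppU1'.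
under eq_bigr do rewrite big_seq_fset0.
under [X in _ + X - _ + _]eq_bigr do rewrite big_seq_fset1 mcoeffU1' eqxx mulr1.
under [X in _ - X + _]eq_bigr do rewrite big_seq_fset0.
under [X in _ + X]eq_bigr do rewrite big_seq_fset1 mcoeffU1' eqxx mulr1.
by rewrite !big1_eq add0r subr0.
Qed.

Lemma sbrGl y b : sbr (Gb b) y =
  - \sum_(m <- msupp y.1) (y.1@_m * (m%:~R / 2 - b%:~R)) *: Gb (m + b)
  + \sum_(s <- msupp y.2) (y.2@_s * 2) *: Lb (b + s).
Proof.
have e1 : (Gb b).1 = 0 by []. have e2 : (Gb b).2 = <<b>> by [].
rewrite /sbr e1 e2 msupp0 msuppU1' !big_seq_fset0 !big_seq_fset1 !add0r.
rewrite mcoeffU1' eqxx.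
by under eq_bigr do rewrite mul1r; under [X in _ + X]eq_bigr do rewrite mul1r.
Qed.

Lemma sbrLl y a : sbr (Lb a) y =
  \sum_(n <- msupp y.1) (y.1@_n * (a - n)%:~R) *: Lb (a + n)
  + \sum_(r <- msupp y.2) (y.2@_r * (a%:~R / 2 - r%:~R)) *: Gb (a + r).
Proof.
have e1 : (Lb a).1 = <<a>> by []. have e2 : (Lb a).2 = 0 by [].
rewrite /sbr e1 e2 msupp0 msuppU1' !big_seq_fset0 !big_seq_fset1 subr0 addr0.
rewrite mcoeffU1' eqxx.
by under eq_bigr do rewrite mul1r; under [X in _ + X]eq_bigr do rewrite mul1r.
Qed.

Lemma LbZ1 c k j : (c *: Lb k).1@_j = c * (k == j)%:R.
Proof. by rewrite /= mcoeffZ mcoeffU1'. Qed.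
Lemma LbZ2 c k j : (c *: Lb k).2@_j = 0.
Proof. by rewrite /= mcoeffZ mcoeff0 mulr0. Qed.
Lemma GbZ1 c k j : (c *: Gb k).1@_j = 0.
Proof. by rewrite /= mcoeffZ mcoeff0 mulr0. Qed.
Lemma GbZ2 c k j : (c *: Gb k).2@_j = c * (k == j)%:R.
Proof. by rewrite /= mcoeffZ mcoeffU1'. Qed.

Lemma pick_shift (g : {malg C[int]}) (F : int -> C) b j :
  \sum_(i <- msupp g) (g@_i * F i) * (i + b == j)%:R = g@_(j - b) * F (j - b).
Proof.
rewrite -(@sum_pick (msupp g) (fun i => g@_i * F i) (j - b) (fset_uniq _)); last first.
  by move=> i /mcoeff_outdom ->; rewrite mul0r.
apply: eq_bigr => i _; congr (_ * _%:R).
by rewrite -(inj_eq (addIr (- b))) addrK.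
Qed.

Lemma pick_shiftl (g : {malg C[int]}) (F : int -> C) b j :
  \sum_(i <- msupp g) (g@_i * F i) * (b + i == j)%:R = g@_(j - b) * F (j - b).
Proof. rewrite -pick_shift; apply: eq_bigr => i _; by rewrite addrC. Qed.

Ltac simpc := under eq_bigr do rewrite ?scaler0 ?mcoeffZ ?mcoeffU1' ?mcoeff0 ?mulr0 ?oppr0.

Lemma sbrG_1 x b j : (sbr x (Gb b)).1@_j = x.2@_(j - b) * 2.
Proof.
rewrite sbrG /= mcoeffD !raddf_sum /=. under eq_bigr do rewrite scaler0 mcoeff0.
rewrite big1_eq add0r. simpc. by rewrite (pick_shift _ (fun=> 2)).
Qed.

Lemma sbrG_2 x b j : (sbr x (Gb b)).2@_j = x.1@_(j - b) * ((j - b)%:~R / 2 - b%:~R).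
Proof.
rewrite sbrG /= mcoeffD !raddf_sum /=; simpc. under [X in _ + X]eq_bigr do rewrite ?scaler0 ?mcoeffZ ?mcoeffU1' ?mcoeff0 ?mulr0 ?oppr0.
rewrite big1_eq addr0. by rewrite (pick_shift _ (fun m => m%:~R / 2 - b%:~R)).
Qed.

Lemma sbrGl_1 y b j : (sbr (Gb b) y).1@_j = y.2@_(j - b) * 2.
Proof.
rewrite sbrGl /= mcoeffD mcoeffN !raddf_sum /=; simpc. under [X in _ + X]eq_bigr do rewrite ?scaler0 ?mcoeffZ ?mcoeffU1' ?mcoeff0 ?mulr0 ?oppr0.
rewrite big1_eq add0r. by rewrite (pick_shiftl _ (fun=> 2)).
Qed.

Lemma sbrGl_2 y b j : (sbr (Gb b) y).2@_j = - (y.1@_(j - b) * ((j - b)%:~R / 2 - b%:~R)).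
Proof.
rewrite sbrGl /= mcoeffD mcoeffN !raddf_sum /=; simpc. under [X in _ + X]eq_bigr do rewrite ?scaler0 ?mcoeffZ ?mcoeffU1' ?mcoeff0 ?mulr0 ?oppr0.
rewrite [X in _ + X]big1_eq addr0 sumrN. by rewrite (pick_shift _ (fun m => m%:~R / 2 - b%:~R)).
Qed.

Lemma sbrLl_1 y a j : (sbr (Lb a) y).1@_j = y.1@_(j - a) * (a - (j - a))%:~R.
Proof.
rewrite sbrLl /= mcoeffD !raddf_sum /=; simpc. under [X in _ + X]eq_bigr do rewrite ?scaler0 ?mcoeffZ ?mcoeffU1' ?mcoeff0 ?mulr0 ?oppr0.
rewrite [X in _ + X]big1_eq addr0. by rewrite (pick_shiftl _ (fun n => (a - n)%:~R)).
Qed.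

Lemma sbrLl_2 y a j : (sbr (Lb a) y).2@_j = y.2@_(j - a) * (a%:~R / 2 - (j - a)%:~R).
Proof.
rewrite sbrLl /= mcoeffD !raddf_sum /=; simpc. under [X in _ + X]eq_bigr do rewrite ?scaler0 ?mcoeffZ ?mcoeffU1' ?mcoeff0 ?mulr0 ?oppr0.
rewrite big1_eq add0r. by rewrite (pick_shiftl _ (fun r => a%:~R / 2 - r%:~R)).
Qed.

Lemma sbrGG a b : sbr (Gb a) (Gb b) = 2 *: Lb (a + b).
Proof.
rewrite sbrG /= msupp0 msuppU1' big_seq_fset0 big_seq_fset1 add0r mcoeffU1' eqxx.
by rewrite mul1r.
Qed.

Lemma sbrLG a b : sbr (Lb a) (Gb b) = (a%:~R / 2 - b%:~R) *: Gb (a + b).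
Proof.
rewrite sbrG /= msupp0 msuppU1' big_seq_fset0 big_seq_fset1 addr0 mcoeffU1' eqxx.
by rewrite mul1r.
Qed.

Section Lin.
Variable f : SV -> SV.
Hypothesis fl : is_linear f.
Lemma lin0 : f 0 = 0.
Proof.
have h := fl 1 0 0; rewrite !scale1r addr0 in h.
by have := congr1 (fun v => v - f 0) h; rewrite subrr addrK => /esym.
Qed.
Lemma linZ a u : f (a *: u) = a *: f u.
Proof. by have := fl a u 0; rewrite addr0 lin0 addr0. Qed.
Lemma linD u v : f (u + v) = f u + f v.
Proof. by have := fl 1 u v; rewrite !scale1r. Qed.
End Lin.

Lemma evenL a : even_elt (Lb a). Proof. by []. Qed.
Lemma oddG a : odd_elt (Gb a). Proof. by []. Qed.
Lemma homL a : homog (Lb a). Proof. by left. Qed.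
Lemma homG a : homog (Gb a). Proof. by right. Qed.

Lemma Z1 (c : C) (x : SV) j : (c *: x).1@_j = c * x.1@_j.
Proof. by rewrite /= mcoeffZ. Qed.
Lemma Z2 (c : C) (x : SV) j : (c *: x).2@_j = c * x.2@_j.
Proof. by rewrite /= mcoeffZ. Qed.

Section Even.
Variable D : SV -> SV.
Hypothesis hD : even_derivation D.

Lemma E1 k j : (j - k)%:~R * (D (Gb k)).2@_j =
  (D (Lb 0)).1@_(j - k) * ((j - k)%:~R / 2 - k%:~R).
Proof.
case: hD => lin _ _ br.
have := br _ _ (homL 0) (homG k).
rewrite sbrLG add0r linZ // => /(congr1 (fun v => v.2@_j)).
rewrite Z2 mcoeffD sbrG_2 sbrLl_2 !subr0 => e.
have e2 : (D (Lb 0)).1@_(j - k) * ((j - k)%:~R / 2 - k%:~R) =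
  (0%:~R / 2 - k%:~R) * (D (Gb k)).2@_j - (D (Gb k)).2@_j * (0%:~R / 2 - j%:~R).
  by rewrite e; ring.
rewrite e2 rmorphB /=; ring.
Qed.

Lemma E2 j : (D (Lb 0)).1@_j = 2 * (D (Gb 0)).2@_j.
Proof.
case: hD => lin _ _ br.
have := br _ _ (homG 0) (homG 0).
rewrite sbrGG addr0 linZ // => /(congr1 (fun v => v.1@_j)).
rewrite Z1 mcoeffD sbrG_1 sbrGl_1 !subr0 => e.
have h2 : (2 : C) != 0 by rewrite natC_eq0.
apply: (mulfI h2); rewrite e; ring.
Qed.
End Even.

Section Odd.
Variable D : SV -> SV.
Hypothesis hD : odd_derivation D.

Lemma O1 k j : (j - k)%:~R * (D (Gb k)).1@_j = 2 * (D (Lb 0)).2@_(j - k).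
Proof.
case: hD => lin _ _ bre _.
have := bre _ _ (evenL 0) (homG k).
rewrite sbrLG add0r linZ // => /(congr1 (fun v => v.1@_j)).
rewrite Z1 mcoeffD sbrG_1 sbrLl_1 !subr0 => e.
have e2 : 2 * (D (Lb 0)).2@_(j - k) =
  (0%:~R / 2 - k%:~R) * (D (Gb k)).1@_j - (D (Gb k)).1@_j * (0 - j)%:~R.
  by rewrite e; ring.
rewrite e2 !rmorphB /=; ring.
Qed.

Lemma q0 : (D (Lb 0)).2@_0 = 0.
Proof.
have := O1 (0:int) (0:int); rewrite subrr mul0r => /esym/eqP.
by rewrite mulf_eq0 natC_eq0 /= => /eqP.
Qed.

Lemma Odiag k : k != 0 -> (D (Gb k)).1@_k = (D (Gb 0)).1@_0.
Proof.
move=> k0; have hq := q0.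
case: hD => lin _ _ bre bro.
have := bro _ _ (oddG (-k)) (homG k).
rewrite sbrGG addNr linZ // => /(congr1 (fun v => v.2@_0)).
rewrite Z2 mcoeffB sbrG_2 sbrGl_2 hq !sub0r opprK => e1.
have := bro _ _ (oddG (-k)) (homG 0).
rewrite sbrGG addr0 linZ // => /(congr1 (fun v => v.2@_(-k))).
rewrite Z2 mcoeffB sbrG_2 sbrGl_2 !subr0 subrr => e3.
have := bre _ _ (evenL (-k)) (homG k).
rewrite sbrLG addNr linZ // => /(congr1 (fun v => v.1@_0)).
rewrite Z1 mcoeffD sbrG_1 sbrLl_1 !sub0r opprK => e4.
move: e1 e3 e4.
set cm := (D (Gb (-k))).1@_(-k).
set cp := (D (Gb k)).1@_k.
set c0 := (D (Gb 0)).1@_0.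
set d := (D (Lb (-k))).2@_(-k).
rewrite !opprK !rmorphB !rmorphN /= => e1 e3 e4.
rewrite -/cp in e1.
have hk : (k%:~R : C) != 0 by rewrite intC_eq0.
have hcm : cm = cp.
  have h : 3%:R * k%:~R * (cp - cm) = 0.
    have -> : 3%:R * k%:~R * (cp - cm) =
      2 * (cm * (- k%:~R / 2 - k%:~R) + cp * (k%:~R / 2 - - k%:~R)).
      by field; rewrite natC_eq0.
    by rewrite -e1 !mulr0.
  move/eqP: h; rewrite !mulf_eq0 natC_eq0 (negbTE hk) /= subr_eq0 => /eqP ->.
  done.
have h : 5%:R * k%:~R * (cp - c0) = 0.
  have -> : 5%:R * k%:~R * (cp - c0) =
    (- 2) * ((d * 2 + cp * (- k%:~R - k%:~R) - (- k%:~R / 2 - k%:~R) * c0)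
       - (2 * d - (cm * (- k%:~R / 2) + c0 * (0%:~R / 2 - - k%:~R)))).
    by rewrite hcm; field; rewrite natC_eq0.
  by rewrite -e4 -e3 !subrr ?subr0 mulr0.
move/eqP: h; rewrite !mulf_eq0 natC_eq0 (negbTE hk) /= subr_eq0 => /eqP ->.
done.
Qed.

Lemma Oshift k j : k != 0 -> (D (Gb k)).1@_j = (D (Gb 0)).1@_(j - k).
Proof.
move=> k0; have [->|jk] := eqVneq j k; first by rewrite subrr Odiag.
have hjk : ((j - k)%:~R : C) != 0 by rewrite intC_eq0 subr_eq0.
apply: (mulfI hjk); rewrite O1.
by have := O1 0 (j - k); rewrite !subr0.
Qed.
End Odd.

Lemma sum_sub (G : int -> C) (s r : seq int) : uniq s -> uniq r ->
  {subset r <= s} -> (forall j, j \notin r -> G j = 0) ->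
  \sum_(j <- s) G j = \sum_(j <- r) G j.
Proof.
move=> us ur rs G0.
rewrite (bigID (mem r)) /= [X in _ + X]big1 ?addr0; last by move=> j /G0.
rewrite -big_filter; apply: perm_big; apply: uniq_perm.
- exact: filter_uniq.
- exact: ur.
move=> j; rewrite mem_filter; apply/andP/idP => [[]//|jr]; split=> //.
exact: rs.
Qed.

Lemma shiftL (F : int -> C) (r s : seq int) (k : int) (z : C) : z != 0 ->
  uniq r -> uniq s -> (forall i, i \notin r -> F i = 0) ->
  {subset r <= s} -> {subset [seq i + k | i <- r] <= s} ->
  \sum_(j <- s) F (j - k) * z ^ j = z ^ k * \sum_(j <- s) F j * z ^ j.
Proof.
move=> z0 ur us F0 rs rks.
rewrite (@sum_sub _ s [seq i + k | i <- r] us _ rks); first last.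
- move=> j jn; rewrite F0 ?mul0r //; apply: contra jn => h.
  by apply/mapP; exists (j - k) => //; rewrite subrK.
- by rewrite map_inj_uniq // => a b /addIr.
rewrite [in RHS](@sum_sub _ s r us ur rs); last by move=> j /F0 ->; rewrite mul0r.
rewrite big_map mulr_sumr; apply: eq_bigr => i _.
by rewrite addrK expfzDr //; ring.
Qed.

Lemma sum_pick_in (s : seq int) (F : int -> C) (j : int) : uniq s -> j \in s ->
  \sum_(i <- s) F i * (i == j)%:R = F j.
Proof.
move=> us js.
rewrite (big_rem j) //= eqxx mulr1 big_seq big1 ?addr0 // => i.
rewrite (mem_rem_uniq _ us) inE; case/andP => /negbTE -> _; by rewrite mulr0.
Qed.

Lemma Lzero (s : seq int) (p : int -> C) : uniq s ->
  (forall z : C, z != 0 -> \sum_(j <- s) p j * z ^ j = 0) ->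
  forall j, j \in s -> p j = 0.
Proof.
move=> us H.
pose N : nat := (\sum_(j <- s) `|j|)%N.
have hN : forall j, j \in s -> (`|j| <= N)%N.
  move=> j js; rewrite /N (big_rem j) //=; exact: leq_addr.
have hN' : forall j, j \in s -> j + N%:Z = (absz (j + N%:Z))%:Z.
  move=> j /hN; lia.
pose P : {poly C} := \sum_(j <- s) p j *: 'X^(absz (j + N%:Z)).
have evP z : z != 0 -> P.[z] = z ^ (N%:Z) * \sum_(j <- s) p j * z ^ j.
  move=> z0; rewrite horner_sum mulr_sumr; apply: eq_big_seq => j js.
  rewrite hornerZ hornerXn.
  have -> : z ^+ absz (j + N%:Z) = z ^ (j + N%:Z) by rewrite {2}(hN' _ js).
  by rewrite expfzDr //; ring.
have P0 : P = 0.
  apply/eqP; apply: contraT => nz.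
  pose rs : seq C := [seq i.+1%:R | i <- iota 0 (size P)].
  have := max_poly_roots nz (rs := rs).
  rewrite size_map size_iota ltnn; apply.
    apply/allP => z /mapP [i _ ->]; apply/rootP.
    by rewrite evP ?natC_eq0 // H ?mulr0 // natC_eq0.
  rewrite map_inj_uniq ?iota_uniq // => a b /eqP.
  by rewrite natC_inj => /eqP [].
move=> j js.
have := congr1 (fun q : {poly C} => q`_(absz (j + N%:Z))) P0.
rewrite /= coef0 /P coef_sum.
under eq_big_seq => i iS do rewrite coefZ coefXn.
rewrite (eq_big_seq (fun i => p i * (i == j)%:R)); last first.
  move=> i iS /=; congr (_ * _%:R).
  have := hN' _ iS; have := hN' _ js.
  case: (eqVneq i j) => [->|ne]; first by rewrite !eqxx.
  move=> h1 h2; case: eqP => [h3|] //.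
  by exfalso; move/eqP: ne; apply; lia.
by rewrite sum_pick_in.
Qed.

Lemma P1 (x y : SV) j : (x + y).1@_j = x.1@_j + y.1@_j.
Proof. by rewrite /= mcoeffD. Qed.
Lemma P2 (x y : SV) j : (x + y).2@_j = x.2@_j + y.2@_j.
Proof. by rewrite /= mcoeffD. Qed.

Section Main.
Variable Delta : SV -> SV.
Hypothesis hl : local_derivation Delta.
Hypothesis h0 : Delta (Gb 0) = 0.

Lemma getD x : exists D0 D1, [/\ even_derivation D0, odd_derivation D1 &
  Delta x = D0 x + D1 x].
Proof.
case: hl => _ /(_ x) [D [[D0 [D1 [e [o eq]]]] ->]].
by exists D0, D1; split.
Qed.

Lemma DeltaComb k c b : Delta (Gb k + c *: Gb b) = Delta (Gb k) + c *: Delta (Gb b).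
Proof. by case: hl => fl _; rewrite addrC fl addrC. Qed.

Lemma oddx k c b : odd_elt (Gb k + c *: Gb b).
Proof. by rewrite /odd_elt /= scaler0 addr0. Qed.

Lemma even_zero k : k != 0 -> (Delta (Gb k)).1 = 0.
Proof.
move=> k0; apply/malgP => j; rewrite mcoeff0.
set w := (Delta (Gb k)).1.
have [jw|jw] := boolP (j \in msupp w); last exact: mcoeff_outdom.
apply: (@Lzero (msupp w) (fun j => w@_j) (fset_uniq _)) jw => z z0.
pose t := - z ^ k.
have [D0 [D1 [e0 o1 eq]]] := getD (Gb k + t *: Gb 0).
rewrite DeltaComb h0 scaler0 addr0 in eq.
pose e := (D1 (Gb 0)).1.
have hw : forall i, w@_i = e@_(i - k) + t * e@_i.
  move=> i; rewrite /w eq /= mcoeffD.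
  have -> : (D0 (Gb k + t *: Gb 0)).1 = 0.
    by case: e0 => _ _ hodd _; apply: hodd; apply: oddx.
  have lin : is_linear D1 by case: o1.
  by rewrite mcoeff0 add0r linD // linZ // P1 Z1 (Oshift _ o1 _ _ k0).
pose s := undup (msupp w ++ msupp e ++ [seq i + k | i <- msupp e]).
have us : uniq s by apply: undup_uniq.
rewrite -(@sum_sub _ s (msupp w) us (fset_uniq _)); first last.
- by move=> i /mcoeff_outdom ->; rewrite mul0r.
- by move=> i iw; rewrite mem_undup !mem_cat iw.
under eq_bigr do rewrite hw mulrDl.
rewrite big_split /= (@shiftL (fun i => e@_i) (msupp e)) //; first last.
- by move=> i ie; rewrite mem_undup !mem_cat ie !orbT.
- by move=> i ie; rewrite mem_undup !mem_cat ie !orbT.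
- by move=> i /mcoeff_outdom.
- exact: fset_uniq.
under [X in _ + X]eq_bigr do rewrite -mulrA.
by rewrite -mulr_sumr -mulrDl /t subrr mul0r.
Qed.

Lemma odd_step k : k != 0 ->
  forall j, ((j - k) * (j - k - k))%:~R * (Delta (Gb k)).2@_j = 0.
Proof.
move=> k0 j; set u := (Delta (Gb k)).2.
have [ju|ju] := boolP (j \in msupp u); last by rewrite (mcoeff_outdom ju) mulr0.
apply: (@Lzero (msupp u) (fun j => ((j - k) * (j - k - k))%:~R * u@_j) (fset_uniq _)) ju => z z0.
pose t := - z ^ k.
have [D0 [D1 [e0 o1 eq]]] := getD (Gb k + t *: Gb 0).
rewrite DeltaComb h0 scaler0 addr0 in eq.
pose g := (D0 (Gb 0)).2.
pose F i := ((i - k) * (i - k - k))%:~R * g@_i.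
have hu : forall i, ((i - k) * (i - k - k))%:~R * u@_i = F (i - k) + t * F i.
  move=> i; rewrite /u eq P2.
  have -> : (D1 (Gb k + t *: Gb 0)).2 = 0.
    by case: o1 => _ _ hodd _ _; apply: hodd; apply: oddx.
  have lin : is_linear D0 by case: e0.
  rewrite mcoeff0 addr0 linD // linZ // P2 Z2.
  have h1 := E1 _ e0 k i. have h2 := E2 _ e0 (i - k).
  rewrite /F -/g; move: h1 h2.
  set h := (D0 (Gb k)).2@_i. set l := (D0 (Lb 0)).1@_(i - k).
  rewrite -/g; set gk := g@_(i - k).
  rewrite !rmorphM !rmorphB /= => h1 h2.
  have -> : (i%:~R - k%:~R) * (i%:~R - k%:~R - k%:~R) * (h + t * g@_i) =
     (i%:~R - k%:~R - k%:~R) * ((i%:~R - k%:~R) * h) +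
     t * ((i%:~R - k%:~R) * (i%:~R - k%:~R - k%:~R) * g@_i) :> C by ring.
  by rewrite h1 h2; field; rewrite natC_eq0.
pose s := undup (msupp u ++ msupp g ++ [seq i + k | i <- msupp g]).
have us : uniq s by apply: undup_uniq.
rewrite -(@sum_sub _ s (msupp u) us (fset_uniq _)); first last.
- by move=> i /mcoeff_outdom ->; rewrite !mulr0 mul0r.
- by move=> i iw; rewrite mem_undup !mem_cat iw.
under eq_bigr do rewrite hu mulrDl.
rewrite big_split /= (@shiftL F (msupp g)) //; first last.
- by move=> i ie; rewrite mem_undup !mem_cat ie !orbT.
- by move=> i ie; rewrite mem_undup !mem_cat ie !orbT.
- by move=> i /mcoeff_outdom hi; rewrite /F hi mulr0.
- exact: fset_uniq.
under [X in _ + X]eq_bigr do rewrite -mulrA.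
by rewrite -mulr_sumr -mulrDl /t subrr mul0r.
Qed.

Lemma supp2 k : k != 0 -> forall j, j != k -> j != k + k ->
  (Delta (Gb k)).2@_j = 0.
Proof.
move=> k0 j a b; have := odd_step _ k0 j; move/eqP.
rewrite mulf_eq0 intC_eq0 mulf_eq0 !subr_eq0 subr_eq (negbTE a) (negbTE b) /=.
by move/eqP.
Qed.

Lemma key2 k : k != 0 -> forall z : C, z != 0 ->
  (Delta (Gb k)).2@_(k + k) * z ^ (k + k) - (Delta (Gb (- k))).2@_(- k + - k) = 0.
Proof.
move=> k0 z z0.
have km0 : - k != 0 by rewrite oppr_eq0.
set up := (Delta (Gb k)).2. set um := (Delta (Gb (- k))).2.
pose s0 := - z ^ (k + k).
have [D0 [D1 [e0 o1 eq]]] := getD (Gb k + s0 *: Gb (- k)).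
rewrite DeltaComb in eq.
pose l := (D0 (Lb 0)).1.
pose F i := l@_i * ((i + k + k)%:~R * (i%:~R / 2 - k%:~R)).
pose p j := ((j - k) * (j + k))%:~R * (up@_j + s0 * um@_j).
have hp : forall j, p j = F (j - k) + s0 * F (j - - k).
  move=> j.
  have ej := congr1 (fun v : SV => v.2@_j) eq.
  have hd1 : (D1 (Gb k + s0 *: Gb (- k))).2 = 0.
    by case: o1 => _ _ hodd _ _; apply: hodd; apply: oddx.
  have lin : is_linear D0 by case: e0.
  rewrite P2 Z2 P2 hd1 mcoeff0 addr0 linD // linZ // P2 Z2 in ej.
  rewrite /p /up /um ej.
  have h1 := E1 _ e0 k j. have h2 := E1 _ e0 (- k) j.
  rewrite /F -/l; move: h1 h2; rewrite -/l.
  set hp := (D0 (Gb k)).2@_j. set hm := (D0 (Gb (- k))).2@_j.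
  set lp := l@_(j - k). set lm := l@_(j - - k).
  rewrite !rmorphM !rmorphB !rmorphD !rmorphN /= => h1 h2.
  have -> : (j%:~R - k%:~R) * (j%:~R + k%:~R) * (hp + s0 * hm) =
    (j%:~R + k%:~R) * ((j%:~R - k%:~R) * hp) +
    s0 * ((j%:~R - k%:~R) * ((j%:~R - - k%:~R) * hm)) :> C by ring.
  by rewrite h1 h2; field; rewrite natC_eq0.
pose s := undup (msupp up ++ msupp um ++ msupp l ++ [seq i + k | i <- msupp l]
  ++ [seq i + - k | i <- msupp l] ++ [:: k + k; - k + - k]).
have us : uniq s by apply: undup_uniq.
have ul : uniq (msupp l) by apply: fset_uniq.
have Fo : forall i, i \notin msupp l -> F i = 0.
  by move=> i /mcoeff_outdom hi; rewrite /F hi mul0r.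
have A : \sum_(j <- s) p j * z ^ j = 0.
  under eq_bigr do rewrite hp mulrDl.
  rewrite big_split /= (@shiftL F (msupp l) _ k) //; first last.
  - by move=> i ie; rewrite mem_undup !mem_cat ie !orbT.
  - by move=> i ie; rewrite mem_undup !mem_cat ie !orbT.
  under [X in _ + X]eq_bigr do rewrite -mulrA.
  rewrite -mulr_sumr (@shiftL F (msupp l) _ (- k)) //; first last.
  - by move=> i ie; rewrite mem_undup !mem_cat ie !orbT.
  - by move=> i ie; rewrite mem_undup !mem_cat ie !orbT.
  rewrite mulrA -mulrDl /s0 mulNr -expfzDr // addrK subrr mul0r //.
have kk : k + k != - k + - k by apply/eqP => h; move/eqP: k0; apply; lia.
have B : \sum_(j <- s) p j * z ^ j =
    p (k + k) * z ^ (k + k) + p (- k + - k) * z ^ (- k + - k).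
  rewrite (@sum_sub _ s [:: k + k; - k + - k] us); first last.
  - move=> j; rewrite !inE negb_or => /andP [a b]; rewrite /p.
    have [->|jk] := eqVneq j k; first by rewrite subrr mul0r rmorph0 !mul0r.
    have [->|jmk] := eqVneq j (- k); first by rewrite addNr mulr0 rmorph0 !mul0r.
    by rewrite (supp2 _ k0 j jk a) (supp2 _ km0 j jmk b) mulr0 add0r mulr0 mul0r.
  - by move=> i; rewrite !inE => /orP [] /eqP ->; rewrite mem_undup !mem_cat !inE eqxx !orbT.
  - by rewrite /= inE andbT.
  by rewrite big_cons big_cons big_nil addr0.
move: A; rewrite B /p.
rewrite (supp2 _ km0 (k + k)); first last.
- by apply/eqP => h; move/eqP: k0; apply; lia.
- by apply/eqP => h; move/eqP: k0; apply; lia.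
rewrite (supp2 _ k0 (- k + - k)); first last.
- by apply/eqP => h; move/eqP: k0; apply; lia.
- by apply/eqP => h; move/eqP: k0; apply; lia.
have e : s0 * z ^ (- k + - k) = -1.
  rewrite /s0 mulNr -expfzDr // (_ : k + k + (- k + - k) = 0) ?expr0z //; lia.
set b := up@_(k + k). set b' := um@_(- k + - k).
move=> H.
have k3 : ((k * k * 3)%:~R : C) != 0.
  rewrite intC_eq0; apply/eqP => h; move/eqP: k0; apply; nia.
apply: (mulfI k3); rewrite mulr0 -H.
rewrite !mulr0 !add0r !addr0 !rmorphM !rmorphB !rmorphD !rmorphN /=.
have -> : (- k%:~R + - k%:~R - k%:~R) * (- k%:~R + - k%:~R + k%:~R) * (s0 * b') *
   z ^ (- k + - k) = (- k%:~R + - k%:~R - k%:~R) * (- k%:~R + - k%:~R + k%:~R) * b' *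
   (s0 * z ^ (- k + - k)) :> C by ring.
rewrite e; ring.
Qed.

Lemma step2 k : k != 0 -> (Delta (Gb k)).2@_(k + k) = 0.
Proof.
move=> k0.
set b := (Delta (Gb k)).2@_(k + k). set b' := (Delta (Gb (- k))).2@_(- k + - k).
have kk0 : k + k != 0 by apply/eqP => h; move/eqP: k0; apply; lia.
have := @Lzero [:: k + k; 0] (fun j => if j == 0 then - b' else b) _ _ (k + k) (mem_head _ _).
rewrite (negbTE kk0); apply.
  by rewrite /= inE kk0.
move=> z z0; rewrite big_cons big_cons big_nil /= (negbTE kk0) expr0z mulr1 addr0.
exact: key2.
Qed.
End Main.

Theorem lemma3p5 (Delta : SV -> SV) :
  local_derivation Delta -> Delta (Gb 0) = 0 ->
  forall m : int, m != 0 -> exists a : C, Delta (Gb m) = a *: Gb m.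
Proof.
move=> hl h0 m m0; exists (Delta (Gb m)).2@_m.
apply: injective_projections => /=.
  by rewrite (even_zero _ hl h0 _ m0) scaler0.
apply/malgP => j; rewrite mcoeffZ mcoeffU1'.
have [<-|jm] := eqVneq m j; first by rewrite mulr1.
rewrite mulr0; have [->|j2] := eqVneq j (m + m); first exact: (step2 _ hl h0 _ m0).
apply: (supp2 _ hl h0 _ m0); first by rewrite eq_sym.
exact: j2.
Qed.
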